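(* Let $1\le n\le d$ and let $P_1,\dots,P_n$ be real quadratic forms on $\mathbb{R}^d$ such that for every choice of linearly independent $\vec w_1,\dots,\vec w_{d-n}\in\mathbb{R}^d$, $\det[\nabla P_1(t);\dots;\nabla P_n(t);\vec w_1;\dots;\vec w_{d-n}]\not\equiv0$ as a polynomial in $t$. Let $V\subset\mathbb{R}^{d+n}$ be a linear subspace and let integers $H_1,H_2$ satisfy $0\le H_1\le\min(\dim(V\cap S_1),d-n)$ and $0\le H_2\le\dim(V/S_1)$. Then $\dim(\pi_t(V))\ge H_1+H_2$ for all $t\in\mathbb{R}^d$ outside the zero set of some nontrivial polynomial of degree at most $H_2$.
   Context: $S_1=\mathbb{R}^d\times\{0\}\subset\mathbb{R}^{d+n}$, and $\dim(V/S_1)=\dim V-\dim(V\cap S_1)$. For $t\in\mathbb{R}^d$, $V(t)\subset\mathbb{R}^{d+n}$ is the linear subspace spanned by $(e_j,\partial_jP_1(t),\dots,\partial_jP_n(t))$, $j=1,\dots,d$ (tangent space of the graph of $(P_1,\dots,P_n)$), and $\pi_t$ is the orthogonal projection onto $V(t)$. *)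

(* Defs.v *)
From HB Require Import structures.
From mathcomp Require Import all_boot all_order all_algebra.
Set Implicit Arguments. Unset Strict Implicit. Unset Printing Implicit Defensive.
Import Order.TTheory GRing.Theory Num.Theory.
Local Open Scope ring_scope.

Section Defs.
Variable R : rcfType.

Definition qform d (A : 'M[R]_d) (t : 'rV[R]_d) : R := (t *m A *m t^T) 0 0.

(* Its gradient (partial derivatives written out):
   d/dt_j (sum_{k,l} A_kl t_k t_l) = sum_l A_jl t_l + sum_k A_kj t_k. *)
Definition qgrad d (A : 'M[R]_d) (t : 'rV[R]_d) : 'rV[R]_d := t *m (A^T + A).

Definition gradmx d n (A : 'I_n -> 'M[R]_d) (t : 'rV[R]_d) : 'M[R]_(n, d) :=
  \matrix_(i < n, j < d) qgrad (A i) t 0 j.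

Definition grad_det d n (hnd : (n <= d)%N) (A : 'I_n -> 'M[R]_d)
    (W : 'M[R]_(d - n, d)) (t : 'rV[R]_d) : R :=
  \det (castmx (subnKC hnd, erefl d) (col_mx (gradmx A t) W)).

(* S_1 = R^d x {0} in R^(d+n), as the row space of a square matrix. *)
Definition S1mx d n : 'M[R]_(d + n) := pid_mx d.

Definition Vt d n (A : 'I_n -> 'M[R]_d) (t : 'rV[R]_d) : 'M[R]_(d, d + n) :=
  row_mx 1%:M (gradmx A t)^T.

(* P is (the matrix, acting on row vectors x |-> x *m P, of) the orthogonal
   projection onto the row space of M, for the standard inner product. *)
Definition is_orth_proj m k (M : 'M[R]_(k, m)) (P : 'M[R]_m) : Prop :=
  forall x : 'rV[R]_m, (x *m P <= M)%MS /\ (x - x *m P) *m M^T = 0.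

(* Real polynomials in d variables of degree at most k, given by their
   coefficients c alpha on exponent vectors alpha (only those with
   |alpha| <= k are used). *)
Definition expdeg d k (a : {ffun 'I_d -> 'I_k.+1}) : nat := (\sum_i (a i : nat))%N.

Definition mpoly_nontrivial d k (c : {ffun 'I_d -> 'I_k.+1} -> R) : Prop :=
  exists a, (expdeg a <= k)%N /\ c a != 0.

Definition mpoly_eval d k (c : {ffun 'I_d -> 'I_k.+1} -> R) (t : 'rV[R]_d) : R :=
  \sum_(a | (expdeg a <= k)%N) c a * \prod_(i < d) t 0 i ^+ a i.

End Defs.

(* Main.v *)
Require Import Defs.
From HB Require Import structures.
From mathcomp Require Import all_boot all_order all_algebra all_fingroup.
Import Order.TTheory GRing.Theory Num.Theory.
Local Open Scope ring_scope.


Section PF.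
Variables (R : rcfType) (d K : nat).
Local Notation T := {ffun 'I_d -> 'I_K.+1}.

Definition mon (a : T) (t : 'rV[R]_d) : R := \prod_(i < d) t 0 i ^+ a i.

Definition PF (k : nat) (f : 'rV[R]_d -> R) :=
  exists c : T -> R, (forall a, (k < expdeg a)%N -> c a = 0) /\
                     forall t, f t = mpoly_eval c t.

Lemma PF_ext k f g : (forall t, f t = g t) -> PF k g -> PF k f.
Proof. by move=> e [c [h1 h2]]; exists c; split=> // t; rewrite e. Qed.
Arguments PF_ext {k f g}.

Lemma PF_weak k l f : (k <= l)%N -> PF k f -> PF l f.
Proof.
move=> kl [c [h1 h2]]; exists c; split=> // a la; apply: h1.
exact: leq_ltn_trans la.
Qed.

Lemma PF_add k f g : PF k f -> PF k g -> PF k (fun t => f t + g t).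
Proof.
move=> [c [h1 h2]] [c' [h1' h2']]; exists (fun a => c a + c' a); split.
  by move=> a la; rewrite h1 // h1' // addr0.
by move=> t; rewrite h2 h2' /mpoly_eval -big_split; apply: eq_bigr => a _; rewrite mulrDl.
Qed.

Lemma PF_scale k x f : PF k f -> PF k (fun t => x * f t).
Proof.
move=> [c [h1 h2]]; exists (fun a => x * c a); split.
  by move=> a la; rewrite h1 // mulr0.
move=> t; rewrite h2 /mpoly_eval big_distrr; apply: eq_bigr => a _ /=; exact: mulrA.
Qed.

Lemma PF_scaler k x f : PF k f -> PF k (fun t => f t * x).
Proof. by move=> h; apply: (PF_ext (g := fun t => x * f t)) => [t|]; [rewrite mulrC | exact: PF_scale]. Qed.

Lemma PF_0 k : PF k (fun _ => 0).
Proof. by exists (fun _ => 0); split=> // t; rewrite /mpoly_eval big1 // => a _; rewrite mul0r. Qed.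

Lemma PF_sum k (I : Type) (r : seq I) (P : pred I) (F : I -> 'rV[R]_d -> R) :
  (forall i, PF k (F i)) -> PF k (fun t => \sum_(i <- r | P i) F i t).
Proof.
move=> hF; elim: r => [|x r IH].
  by apply: (PF_ext (g := fun _ => 0)) => [t|]; [rewrite big_nil | exact: PF_0].
case hx : (P x).
  apply: (PF_ext (g := fun t => F x t + \sum_(i <- r | P i) F i t)) => [t|].
    by rewrite big_cons hx.
  exact: PF_add.
by apply: (PF_ext (g := fun t => \sum_(i <- r | P i) F i t)) => // t; rewrite big_cons hx.
Qed.

Lemma expdeg_le (a : T) i : (a i <= expdeg a)%N.
Proof. by rewrite /expdeg (bigD1 i) //= leq_addr. Qed.

Definition zT : T := [ffun => ord0].

Lemma PF_const x : PF 0 (fun _ => x).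
Proof.
exists (fun a => if a == zT then x else 0); split.
  move=> a la; case: eqP => // ea; move: la; rewrite ea /expdeg big1 // => i _.
  by rewrite ffunE.
move=> t; rewrite /mpoly_eval (bigD1 zT) /=; last first.
  by rewrite /expdeg big1 // => i _; rewrite ffunE.
rewrite eqxx [X in _ + X]big1 ?addr0.
  by rewrite big1 ?mulr1 // => i _; rewrite ffunE expr0.
by move=> a /andP[_ /negbTE ->]; rewrite mul0r.
Qed.

Definition eT (i : 'I_d) : T := [ffun j => if j == i then inord 1 else ord0].

Lemma PF_coord i : (0 < K)%N -> PF 1 (fun t => t 0 i).
Proof.
move=> K0.
have e1 : ((inord 1 : 'I_K.+1) : nat) = 1%N by rewrite inordK.
have de : expdeg (eT i) = 1%N.
  rewrite /expdeg (bigD1 i) //= big1 ?addn0; first by rewrite ffunE eqxx e1.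
  by move=> j /negbTE ji; rewrite ffunE ji.
exists (fun a => if a == eT i then 1 else 0); split.
  by move=> a la; case: eqP => // ea; move: la; rewrite ea de.
move=> t; rewrite /mpoly_eval (bigD1 (eT i)) /=; last by rewrite de.
rewrite eqxx [X in _ + X]big1 ?addr0; last by move=> a /andP[_ /negbTE ->]; rewrite mul0r.
rewrite mul1r (bigD1 i) //= big1 ?mulr1; first by rewrite ffunE eqxx e1 expr1.
by move=> j /negbTE ji; rewrite ffunE ji expr0.
Qed.

Definition addm (p : T * T) : T := [ffun i => inord (p.1 i + p.2 i)].

Lemma eval_restrict k (c : T -> R) t : (k <= K)%N ->
  (forall a, (k < expdeg a)%N -> c a = 0) ->
  mpoly_eval c t = \sum_(a | (expdeg a <= k)%N) c a * mon a t.
Proof.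
move=> kK h; rewrite /mpoly_eval (bigID (fun a => expdeg a <= k)%N) /=.
rewrite [X in _ + X]big1 ?addr0; last first.
  by move=> a /andP[_]; rewrite -ltnNge => /h ->; rewrite mul0r.
apply: eq_bigl => a; apply/andP/idP => [[]//|ak]; split=> //.
exact: leq_trans ak kK.
Qed.

Lemma PF_mul {k l f g} : (k + l <= K)%N -> PF k f -> PF l g ->
  PF (k + l) (fun t => f t * g t).
Proof.
move=> klK [c [h1 h2]] [c' [h1' h2']].
pose Q (p : T * T) := (expdeg p.1 <= k)%N && (expdeg p.2 <= l)%N.
have addmE p : Q p -> forall i, (addm p i : nat) = (p.1 i + p.2 i)%N.
  case/andP=> q1 q2 i; rewrite ffunE inordK // ltnS.
  apply: leq_trans klK; apply: leq_add.
    exact: leq_trans (expdeg_le _ _) q1.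
  exact: leq_trans (expdeg_le _ _) q2.
have degE p : Q p -> expdeg (addm p) = (expdeg p.1 + expdeg p.2)%N.
  by move=> qp; rewrite /expdeg -big_split; apply: eq_bigr => i _; rewrite addmE.
have monE p t : Q p -> mon (addm p) t = mon p.1 t * mon p.2 t.
  by move=> qp; rewrite /mon -big_split; apply: eq_bigr => i _; rewrite addmE // exprD.
exists (fun e => \sum_(p | Q p && (addm p == e)) c p.1 * c' p.2); split.
  move=> e le; rewrite big1 // => p /andP[qp /eqP ep]; move: le.
  rewrite -ep degE // => le; case/andP: qp => q1 q2.
  by move: le; rewrite ltnNge leq_add.
have kK : (k <= K)%N by exact: leq_trans (leq_addr _ _) klK.
have lK : (l <= K)%N by exact: leq_trans (leq_addl _ _) klK.
move=> t; rewrite h2 h2' (eval_restrict _ _ _ kK h1) (eval_restrict _ _ _ lK h1').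
rewrite big_distrl /=.
rewrite (eq_bigr (fun a => \sum_(b | (expdeg b <= l)%N) c a * mon a t * (c' b * mon b t))); last first.
  by move=> a _; rewrite big_distrr.
rewrite pair_big_dep /=.
rewrite (partition_big addm (fun e => (expdeg e <= K)%N)) /=; last first.
  move=> p qp; rewrite degE //; apply: leq_trans klK.
  by case/andP: qp => q1 q2; rewrite leq_add.
rewrite /mpoly_eval; apply: eq_bigr => e _; rewrite big_distrl /=.
apply: eq_bigr => p /andP[qp /eqP ep]; rewrite -ep; have := monE p t qp; rewrite {1}/mon => ->; exact: mulrACA.
Qed.

Lemma PF_prod m (F : 'I_m -> 'rV[R]_d -> R) : (m <= K)%N ->
  (forall i, PF 1 (F i)) -> PF m (fun t => \prod_i F i t).
Proof.
elim: m F => [|m IH] F hm hF.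
  by apply: (PF_ext (g := fun _ => 1)) => [t|]; [rewrite big_ord0 | exact: PF_const].
apply: (PF_ext (g := fun t => (\prod_(i < m) F (widen_ord (leqnSn m) i) t) * F ord_max t)).
  by move=> t; rewrite big_ord_recr.
have := PF_mul (k := m) (l := 1) _ (IH (fun i => F (widen_ord (leqnSn m) i)) _ _) (hF ord_max).
rewrite addn1; apply=> //; exact: ltnW.
Qed.

Lemma PF_det_block m1 m2 (C : 'M[R]_(m1, m1 + m2)) (L : 'rV[R]_d -> 'M[R]_(m2, m1 + m2)) :
  (m2 <= K)%N -> (forall i j, PF 1 (fun t => L t i j)) ->
  PF m2 (fun t => \det (col_mx C (L t))).
Proof.
move=> hm hL.
apply: (PF_ext (g := fun t => \sum_(s : 'S_(m1 + m2)) (-1) ^+ s *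
   ((\prod_(i < m1) C i (s (lshift m2 i))) * \prod_(i < m2) L t i (s (rshift m1 i))))).
  move=> t; rewrite /determinant; apply: eq_bigr => s _; congr (_ * _).
  by rewrite big_split_ord /=; congr (_ * _); apply: eq_bigr => i _;
     rewrite ?col_mxEu ?col_mxEd.
apply: PF_sum => s; apply: PF_scale.
have := PF_mul (k := 0) (l := m2) _ (PF_const (\prod_(i < m1) C i (s (lshift m2 i))))
  (PF_prod _ (fun i t => L t i (s (rshift m1 i))) hm (fun i => hL _ _)).
by rewrite add0n; apply.
Qed.

Definition PFmx {m p} k (F : 'rV[R]_d -> 'M[R]_(m, p)) :=
  forall i j, PF k (fun t => F t i j).

Lemma PFmx_const m p (M : 'M[R]_(m, p)) : PFmx 0 (fun _ => M).
Proof. by move=> i j; exact: PF_const. Qed.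

Lemma PFmx_id : (0 < K)%N -> PFmx 1 (fun t => t).
Proof. by move=> K0 i j; rewrite [i]ord1; exact: PF_coord. Qed.

Lemma PFmx_add m p k F G : @PFmx m p k F -> PFmx k G -> PFmx k (fun t => F t + G t).
Proof.
move=> hF hG i j; apply: (PF_ext (g := fun t => F t i j + G t i j)) => [t|].
  by rewrite mxE.
exact: PF_add.
Qed.

Lemma PFmx_weak m p k l F : (k <= l)%N -> @PFmx m p k F -> PFmx l F.
Proof. by move=> kl hF i j; apply: PF_weak kl _. Qed.

Lemma PFmx_mul m p q k l (F : _ -> 'M_(m, p)) (G : _ -> 'M_(p, q)) :
  (k + l <= K)%N -> PFmx k F -> PFmx l G -> PFmx (k + l) (fun t => F t *m G t).
Proof.
move=> hkl hF hG i j.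
apply: (PF_ext (g := fun t => \sum_(r < p) F t i r * G t r j)) => [t|].
  by rewrite mxE.
by apply: PF_sum => r; apply: PF_mul.
Qed.

End PF.
Arguments PF_ext {R d K k f g}.
Arguments PF_mul {R d K k l f g}.
Arguments PFmx_mul {R d K m p q k l F G}.
Arguments PFmx_add {R d K m p k F G}.
Arguments PFmx_weak {R d K m p k l F}.
Arguments PFmx_const {R d K m p}.
Arguments PFmx_id {R d K}.
Arguments PF_det_block {R d K m1 m2 C L}.




Section LinAlg.
Variable F : fieldType.

Lemma row_freeI m n (M : 'M[F]_(m, n)) :
  (forall v : 'rV_m, v *m M = 0 -> v = 0) -> row_free M.
Proof.
move=> h; rewrite -kermx_eq0; apply/eqP/row_matrixP => i; rewrite row0.
by apply: h; rewrite -row_mul mulmx_ker row0.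
Qed.

Lemma row_freeE m n (M : 'M[F]_(m, n)) (v : 'rV_m) :
  row_free M -> v *m M = 0 -> v = 0.
Proof.
by case/row_freeP=> B MB vM; rewrite -[v]mulmx1 -MB mulmxA vM mul0mx.
Qed.

Lemma rank_castmx m n m' n' (e : (m = m') * (n = n')) (M : 'M[F]_(m, n)) :
  \rank (castmx e M) = \rank M.
Proof. by case: e => e1 e2; case: m' / e1; case: n' / e2. Qed.

Lemma S1_rsub d n m (x : 'M[F]_(m, d + n)) : (x <= (pid_mx d : 'M_(d + n)))%MS -> rsubmx x = 0.
Proof.
case/submxP=> D ->; rewrite pid_mx_block block_mxEh mul_mx_row row_mxKr.
by rewrite col_mx0 mulmx0.
Qed.

Lemma rsub_S1 d n m (x : 'M[F]_(m, d + n)) : rsubmx x = 0 -> (x <= (pid_mx d : 'M_(d + n)))%MS.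
Proof.
move=> h; have -> : x = x *m pid_mx d.
  rewrite -[x]hsubmxK h pid_mx_block mul_row_block.
  by rewrite !mulmx0 mulmx1 ?mul0mx !addr0.
exact: submxMl.
Qed.


End LinAlg.

Lemma exists_nonroot (R : numFieldType) (p : {poly R}) : p != 0 -> exists x, ~~ root p x.
Proof.
move=> p0; pose rs := [seq (i%:R : R) | i <- iota 0 (size p)].
have : ~~ all (root p) rs.
  apply/negP=> hall; have := max_poly_roots p0 hall.
  rewrite map_inj_uniq ?iota_uniq; last by move=> i j /eqP; rewrite eqr_nat => /eqP.
  by rewrite size_map size_iota ltnn => /(_ isT).
by case/allPn=> x _ hx; exists x.
Qed.
Arguments row_freeI {F m n M}.
Arguments row_freeE {F m n M v}.
Arguments rank_castmx {F m n m' n'}.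
Arguments S1_rsub {F d n m x}.
Arguments rsub_S1 {F d n m x}.
Arguments exists_nonroot {R p}.


Theorem mainTheorem16 (R : rcfType) (d n : nat) (hn : (1 <= n)%N) (hnd : (n <= d)%N)
    (A : 'I_n -> 'M[R]_d)
    (hdet : forall W : 'M[R]_(d - n, d), row_free W ->
              exists t : 'rV[R]_d, grad_det hnd A W t != 0)
    (V : 'M[R]_(d + n)) (H1 H2 : nat)
    (hH1 : (H1 <= minn (\rank (V :&: S1mx R d n))%MS (d - n))%N)
    (hH2 : (H2 <= \rank V - \rank (V :&: S1mx R d n)%MS)%N) :
  exists c : {ffun 'I_d -> 'I_H2.+1} -> R,
    mpoly_nontrivial c /\
    forall t : 'rV[R]_d, mpoly_eval c t != 0 ->
      forall P : 'M[R]_(d + n), is_orth_proj (Vt A t) P ->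
        (H1 + H2 <= \rank (V *m P))%N.
Proof.
set C := (V :&: S1mx R d n)%MS.
have [hH1u hH1dn] : (H1 <= \rank C)%N /\ (H1 <= d - n)%N.
  by move: hH1; rewrite leq_min => /andP.
pose B0 : 'M[R]_(H1, d + n) := pid_mx H1 *m row_base C.
have rB0 : row_free B0.
  by rewrite /row_free mxrankMfree ?row_base_free // rank_pid_mx.
have B0C : (B0 <= C)%MS by rewrite (submx_trans (submxMl _ _)) // eq_row_base.
have B0V : (B0 <= V)%MS := submx_trans B0C (capmxSl _ _).
have B0S : (B0 <= (pid_mx d : 'M_(d + n)))%MS := submx_trans B0C (capmxSr _ _).
pose U' := lsubmx B0.
have B0E : B0 = row_mx U' 0 by rewrite -(S1_rsub B0S) hsubmxK.
have rU' : row_free U'.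
  apply: row_freeI => v vU; apply: (row_freeE rB0).
  by rewrite B0E mul_mx_row vU mulmx0 row_mx0.
pose Q : 'M[R]_(d + n, n) := col_mx 0 1%:M.
have rsubQ m (x : 'M[R]_(m, d + n)) : x *m Q = rsubmx x.
  by rewrite -{1}[x]hsubmxK mul_row_col mulmx0 add0r mulmx1.
have kerQ : (kermx Q <= (pid_mx d : 'M_(d + n)))%MS.
  by apply: rsub_S1; rewrite -rsubQ mulmx_ker.
have rVQ : (H2 <= \rank (V *m Q))%N.
  have h1 : (\rank (V :&: kermx Q) <= \rank C)%N.
    by apply: mxrankS; apply: capmxS.
  have h2 := mxrank_mul_ker V Q.
  apply: (leq_trans hH2); rewrite leq_subLR -h2 addnC leq_add2r //.
pose Z0 : 'M[R]_(H2, n) := pid_mx H2 *m row_base (V *m Q).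
have rZ0 : row_free Z0.
  by rewrite /row_free mxrankMfree ?row_base_free // rank_pid_mx.
have [D0 hD0] : exists D0, Z0 = D0 *m (V *m Q).
  by apply/submxP; rewrite (submx_trans (submxMl _ _)) // eq_row_base.
pose X2 : 'M[R]_(H2, d + n) := D0 *m V.
have X2V : (X2 <= V)%MS := submxMl _ _.
pose Y' := lsubmx X2.
pose Z' := rsubmx X2.
have Z'E : Z' = Z0 by rewrite hD0 mulmxA rsubQ.
have rZ' : row_free Z' by rewrite Z'E.
pose G := gradmx A.
pose N t : 'M[R]_(H1 + H2, d) := col_mx U' (Y' + Z' *m G t).
have claimA t : row_free (N t) -> forall P, is_orth_proj (Vt A t) P ->
    (H1 + H2 <= \rank (V *m P))%N.
  move=> rN P hP.
  pose X : 'M[R]_(H1 + H2, d + n) := col_mx B0 X2.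
  have XV : (X <= V)%MS by rewrite col_mx_sub B0V.
  have XN : X *m (Vt A t)^T = N t.
    rewrite /Vt tr_row_mx trmx1 trmxK /X mul_col_mx B0E -[X2]hsubmxK !mul_row_col.
    by rewrite mulmx1 mul0mx addr0 mulmx1.
  have rXP : row_free (X *m P).
    apply: row_freeI => v vXP.
    have [_ h] := hP (v *m X).
    apply: (row_freeE rN); rewrite -XN mulmxA.
    by move: h; rewrite -(mulmxA v X P) vXP subr0.
  apply: leq_trans (mxrankS (submxMr P XV)).
  by move/eqP: rXP => ->.
pose E := row_ebase U'.
pose W : 'M[R]_(d - n, d) := pid_mx (d - n) *m E.
have rU'H : \rank U' = H1 by apply/eqP.
have rW : row_free W.
  rewrite /row_free mxrankMfree ?rank_pid_mx ?leq_subr //.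
  by rewrite row_free_unit row_ebase_unit.
have U'W : (U' <= W)%MS.
  have hrb : (U' <= row_base U')%MS by rewrite eq_row_base.
  apply: submx_trans hrb _.
  have -> : row_base U' = pid_mx (\rank U') *m E by [].
  have -> : (pid_mx (\rank U') : 'M[R]_(\rank U', d)) =
      (pid_mx (\rank U') : 'M[R]_(\rank U', d - n)) *m pid_mx (d - n).
    by rewrite mul_pid_mx rU'H (minn_idPl hH1dn) (minn_idPr hH1dn).
  by rewrite -mulmxA submxMl.
have [t0 ht0] := hdet W rW.
have rGW : row_free (col_mx (G t0) W).
  move: ht0; rewrite /grad_det -unitfE -unitmxE -row_free_unit /row_free rank_castmx => /eqP h.
  by rewrite /row_free h subnKC.
pose KK := col_mx U' (Z' *m G t0).
have rK : row_free KK.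
  apply: row_freeI => v; rewrite -[v]hsubmxK mul_row_col => h.
  have [D1 hD1] := submxP U'W.
  have h2 : row_mx (rsubmx v *m Z') (lsubmx v *m D1) *m col_mx (G t0) W = 0.
    by rewrite mul_row_col -!mulmxA -hD1 addrC.
  have := row_freeE rGW h2; rewrite -row_mx0 => /eq_row_mx [h3 h4].
  have -> := row_freeE rZ' h3.
  have -> : lsubmx v = 0.
    by apply: (row_freeE rU'); rewrite hD1 mulmxA h4 mul0mx.
  by rewrite row_mx0.
have [B hB] := row_freeP rK.
pose Mm : 'M[R]_(H1 + H2) := col_mx (0 : 'M[R]_(H1, d)) Y' *m B.
have [s hs] := exists_nonroot (monic_neq0 (char_poly_monic (- Mm))).
have rS : row_free (s%:M + Mm).
  apply: row_freeI => v hv; apply/eqP; apply: contraNT hs => v0.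
  rewrite -eigenvalue_root_char; apply/eigenvalueP; exists v => //.
  by rewrite mulmxN; move/eqP: hv; rewrite mulmxDr mul_mx_scalar addr_eq0 => /eqP ->.
pose N' := s *: KK + col_mx (0 : 'M[R]_(H1, d)) Y'.
have N'B : N' *m B = s%:M + Mm by rewrite mulmxDl -scalemxAl hB scalemx1.
have rN' : \rank N' = (H1 + H2)%N.
  apply/eqP; rewrite eqn_leq rank_leq_row /=.
  by have := mxrankM_maxl N' B; rewrite N'B (eqP rS).
pose t1 := s *: t0.
have Gs : G t1 = s *: G t0.
  apply/matrixP => i j; rewrite !mxE big_distrr; apply: eq_bigr => k _.
  by rewrite /t1 mxE; symmetry; apply: mulrA.
have DN : block_mx s%:M 0 0 1%:M *m N t1 = N'.
  rewrite /N mul_block_col Gs -scalemxAr !mul0mx addr0 add0r mul1mx mul_scalar_mx.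
  by rewrite /N' /KK scale_col_mx add_col_mx addr0 addrC.
have rN1 : row_free (N t1).
  rewrite /row_free eqn_leq rank_leq_row /= -{1}rN' -DN; exact: mxrankM_maxr.
have [B1 hB1] := row_freeP rN1.
pose f t := \det (N t *m B1).
have PFf : PF R d H2 H2 f.
  apply: (PF_ext (g := fun t => \det (col_mx (U' *m B1) ((Y' + Z' *m G t) *m B1)))).
    by move=> t; rewrite /f /N mul_col_mx.
  apply: PF_det_block => // i j.
  have H2pos : (0 < H2)%N by apply: leq_ltn_trans (leq0n _) (ltn_ord i).
  have hG : PFmx R d H2 1 G.
    move=> a b; apply: (PF_ext (g := fun t => (t *m ((A a)^T + A a)) 0 b)).
      by move=> t; rewrite /G /gradmx mxE.
    have := PFmx_mul (k := 1) (l := 0) _ (PFmx_id H2pos) (PFmx_const ((A a)^T + A a)).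
    by rewrite addn0; apply.
  have h1 : PFmx R d H2 1 (fun t => Y' + Z' *m G t).
    apply: PFmx_add; first exact: (PFmx_weak (k := 0)) (PFmx_const Y').
    have := PFmx_mul (k := 0) (l := 1) _ (PFmx_const Z') hG.
    by rewrite add0n; apply.
  have := PFmx_mul (k := 1) (l := 0) _ h1 (PFmx_const B1).
  by rewrite addn0; apply.
have [c [hc1 hc2]] := PFf.
exists c; split.
  have f1 : f t1 = 1 by rewrite /f hB1 det1.
  case: (boolP [exists a, (expdeg a <= H2)%N && (c a != 0)]).
    by case/existsP => a /andP [ha1 ha2]; exists a.
  move/existsPn => hne; exfalso; move: f1; rewrite hc2 /mpoly_eval big1.
    by move/eqP; rewrite eq_sym oner_eq0.
  by move=> a ha; move: (hne a); rewrite ha /= negbK => /eqP ->; rewrite mul0r.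
move=> t; rewrite -hc2 => ft; apply: claimA.
have h : row_free (N t *m B1) by rewrite row_free_unit unitmxE unitfE.
rewrite /row_free eqn_leq rank_leq_row /= -{1}(eqP h); exact: mxrankM_maxl.
Qed.
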